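(* Let $E>0$ and $0<\delta_0<1$. There exists an integer $\ell_0=\ell_0(E,\delta_0)$ such that for every $v\in\mathcal{X}^1$ with $E(v)\le E$, either $\big|1-|v(x)|\big|<\delta_0$ for all $x\in\mathbb{R}$, or there exist $\ell\le\ell_0$ points $x_1,\dots,x_\ell$ such that $\big|1-|v(x_i)|\big|\ge\delta_0$ for all $1\le i\le\ell$ and $\big|1-|v(x)|\big|\le\delta_0$ for all $x\in\mathbb{R}\setminus\bigcup_{i=1}^\ell[x_i-1,x_i+1]$.
   Context: $\mathcal{X}^1=\{w\in L^\infty(\mathbb{R};\mathbb{C}):\ w'\in L^2,\ 1-|w|^2\in L^2\}$. $E(v)=\frac12\int_\mathbb{R}|v'|^2+\frac14\int_\mathbb{R}(1-|v|^2)^2$. *)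

(* Defs.v *)
(* R : realType. A complex-valued function v : R -> C
   is represented by its real and imaginary parts (v1, v2). *)
From HB Require Import structures.
From mathcomp Require Import all_boot all_order all_algebra.
From mathcomp Require Import all_classical all_reals all_analysis.
Set Implicit Arguments. Unset Strict Implicit. Unset Printing Implicit Defensive.
Import Order.TTheory GRing.Theory Num.Theory.
Import numFieldNormedType.Exports.
Local Open Scope classical_set_scope.
Local Open Scope ring_scope.

Section Defs.
Variable R : realType.
Local Notation leb := (@lebesgue_measure R).

Definition cmod (v1 v2 : R -> R) (x : R) : R := Num.sqrt (v1 x ^+ 2 + v2 x ^+ 2).

Definition L2 (f : R -> R) : Prop :=
  measurable_fun setT f /\ (\int[leb]_x ((f x ^+ 2)%:E) < +oo)%E.

(* f is essentially bounded (for the continuous functions used here: bounded) *)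
Definition Linfty (f : R -> R) : Prop := exists M : R, forall x, `|f x| <= M.

(* g is the (weak) derivative of v: v is the primitive of the locally
   integrable g, i.e. v(y) - v(x) = int_x^y g  (H^1_loc, continuous representative) *)
Definition is_weak_deriv (v g : R -> R) : Prop :=
  measurable_fun setT g /\
  forall x y : R, x <= y ->
    leb.-integrable `[x, y] (EFin \o g) /\
    v y - v x = Rintegral leb `[x, y] g.

Definition in_X1 (v1 v2 g1 g2 : R -> R) : Prop :=
  Linfty v1 /\ Linfty v2 /\
  is_weak_deriv v1 g1 /\ is_weak_deriv v2 g2 /\
  L2 g1 /\ L2 g2 /\
  L2 (fun x => 1 - cmod v1 v2 x ^+ 2).

Definition energy (v1 v2 g1 g2 : R -> R) : \bar R :=
  ((2^-1)%:E * \int[leb]_x ((g1 x ^+ 2 + g2 x ^+ 2)%:E)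
   + (4^-1)%:E * \int[leb]_x (((1 - cmod v1 v2 x ^+ 2) ^+ 2)%:E))%E.

End Defs.

(* Main.v *)
Require Import Defs.
From HB Require Import structures.
From mathcomp Require Import all_boot all_order all_algebra.
From mathcomp Require Import all_classical all_reals all_analysis.
From mathcomp Require Import lra ring.
Import Order.TTheory GRing.Theory Num.Theory.
Import numFieldNormedType.Exports.
Local Open Scope classical_set_scope.
Local Open Scope ring_scope.
Set Implicit Arguments. Unset Strict Implicit. Unset Printing Implicit Defensive.

Lemma sqrt_lip (R : realType) (a b c d : R) :
  `|Num.sqrt (a ^+ 2 + b ^+ 2) - Num.sqrt (c ^+ 2 + d ^+ 2)| <= `|a - c| + `|b - d|.
Proof.
suff H : forall a b c d : R, Num.sqrt (a ^+ 2 + b ^+ 2) <= Num.sqrt (c ^+ 2 + d ^+ 2) + (`|a - c| + `|b - d|).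
  rewrite ler_norml; apply/andP; split.
    have := H c d a b; rewrite (distrC c a) (distrC d b); lra.
  have := H a b c d; lra.
move=> {}a {}b {}c {}d.
set Q := Num.sqrt (c ^+ 2 + d ^+ 2).
have Q0 : 0 <= Q by apply: sqrtr_ge0.
have QQ : Q ^+ 2 = c ^+ 2 + d ^+ 2.
  by rewrite sqr_sqrtr // addr_ge0 ?sqr_ge0.
set u := `|a - c|; set w := `|b - d|.
have u0 : 0 <= u by exact: normr_ge0. have w0 : 0 <= w by exact: normr_ge0.
have ha : `|a| <= `|c| + u.
  by rewrite /u (le_trans _ (ler_normD _ _)) // addrC subrK.
have hb : `|b| <= `|d| + w.
  by rewrite /w (le_trans _ (ler_normD _ _)) // addrC subrK.
have hc : `|c| <= Q.
  rewrite -(sqrtr_sqr c) ler_sqrt ?addr_ge0 ?sqr_ge0 //; rewrite lerDl sqr_ge0 //.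
have hd : `|d| <= Q.
  rewrite -(sqrtr_sqr d) ler_sqrt ?addr_ge0 ?sqr_ge0 //; rewrite lerDr sqr_ge0 //.
have t0 : 0 <= Q + (u + w) by rewrite addr_ge0 // addr_ge0.
rewrite -[X in _ <= X]ger0_norm // -sqrtr_sqr ler_sqrt ?sqr_ge0 //.
rewrite -(real_normK (num_real a)) -(real_normK (num_real b)).
have a0 : 0 <= `|a| by exact: normr_ge0. have b0 : 0 <= `|b| by exact: normr_ge0.
have c0 : 0 <= `|c| by exact: normr_ge0. have d0 : 0 <= `|d| by exact: normr_ge0.
have ea : `|a| ^+ 2 <= (`|c| + u) ^+ 2 by rewrite !expr2 ler_pM.
have eb : `|b| ^+ 2 <= (`|d| + w) ^+ 2 by rewrite !expr2 ler_pM.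
rewrite -(real_normK (num_real c)) -(real_normK (num_real d)) in QQ.
nra.
Qed.

Section S.
Variable R : realType.
Local Notation leb := (@lebesgue_measure R).

Lemma incr_bound (v g : R -> R) (x y : R) : is_weak_deriv v g -> x <= y ->
  (`|v y - v x|%:E <= \int[leb]_(t in `[x, y]) (`|g t|)%:E)%E.
Proof.
move=> [mg H] xy; have [ig ->] := H x y xy.
rewrite EFin_normr_Rintegral //.
apply: le_trans (le_abse_integral _ _ _) _ => //.
  by apply/measurable_realfun.measurable_EFinP; apply: measurable_funS mg.

Qed.


Variables (v1 v2 g1 g2 : R -> R).
Hypothesis HX : in_X1 v1 v2 g1 g2.

Definition hh x := 2^-1 * (g1 x ^+ 2 + g2 x ^+ 2) + 4^-1 * ((1 - cmod v1 v2 x ^+ 2) ^+ 2).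

Lemma hh_ge0 x : 0 <= hh x.
Proof. by rewrite /hh addr_ge0 // mulr_ge0 // ?addr_ge0 ?sqr_ge0 // invr_ge0. Qed.

Lemma mA : measurable_fun setT (fun x => g1 x ^+ 2 + g2 x ^+ 2).
Proof.
case: HX => _ [_ [[m1 _] [[m2 _] _]]].
by apply: measurable_realfun.measurable_funD; apply: measurable_realfun.measurable_funX.
Qed.

Lemma mB : measurable_fun setT (fun x => (1 - cmod v1 v2 x ^+ 2) ^+ 2).
Proof.
case: HX => _ [_ [_ [_ [_ [_ [mF _]]]]]].
by apply: measurable_realfun.measurable_funX.
Qed.

Lemma mhh : measurable_fun setT hh.
Proof.
apply: measurable_realfun.measurable_funD; apply: measurable_realfun.measurable_funM => //; [exact: mA|exact: mB].
Qed.

Lemma energy_hh : energy v1 v2 g1 g2 = (\int[leb]_x (hh x)%:E)%E.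
Proof.
rewrite /energy /hh; apply/esym.
under eq_integral do rewrite EFinD.
rewrite ge0_integralD //; last 4 first.
- by move=> x _; rewrite lee_fin mulr_ge0 ?invr_ge0 ?addr_ge0 ?sqr_ge0.
- apply/measurable_realfun.measurable_EFinP.
  by apply: measurable_realfun.measurable_funM => //; exact: mA.
- by move=> x _; rewrite lee_fin mulr_ge0 ?invr_ge0 ?addr_ge0 ?sqr_ge0.
- apply/measurable_realfun.measurable_EFinP.
  by apply: measurable_realfun.measurable_funM => //; exact: mB.
under eq_integral do rewrite EFinM.
under [X in (_ + X)%E]eq_integral do rewrite EFinM.
rewrite !ge0_integralZl_EFin //.
- by move=> x _; rewrite lee_fin sqr_ge0.
- apply/measurable_realfun.measurable_EFinP; exact: mB.
- by move=> x _; rewrite lee_fin addr_ge0 ?sqr_ge0.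
- apply/measurable_realfun.measurable_EFinP; exact: mA.
Qed.


Lemma ptw (d a b B : R) : 0 < d -> 0 <= B ->
  `|a| + `|b| <= 8 / d * (2^-1 * (a ^+ 2 + b ^+ 2) + 4^-1 * B) + d / 8.
Proof.
move=> hd hB.
rewrite -(ler_pM2l hd).
have -> : d * (8 / d * (2^-1 * (a ^+ 2 + b ^+ 2) + 4^-1 * B) + d / 8)
   = 4 * (a ^+ 2 + b ^+ 2) + 2 * B + d ^+ 2 / 8.
  by field; rewrite gt_eqF.
rewrite -(real_normK (num_real a)) -(real_normK (num_real b)).
have ha : 0 <= `|a| by exact: normr_ge0.
have hb : 0 <= `|b| by exact: normr_ge0.
have h1 := sqr_ge0 (2 * `|a| - d / 4).
have h2 := sqr_ge0 (2 * `|b| - d / 4).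
nra.
Qed.

Lemma leb_itv (x y : R) : x <= y -> leb [set` `[x, y]] = (y - x)%:E.
Proof.
move=> xy; rewrite lebesgue_measure_itv /= lte_fin.
case: ltP => h; first by rewrite EFinN.
have -> : y = x by apply/eqP; rewrite eq_le h xy.
by rewrite subrr.
Qed.


Ltac mhhE := apply/measurable_realfun.measurable_EFinP; apply: measurable_funS mhh => //.

Lemma local (d0 x0 : R) : 0 < d0 -> d0 <= `|1 - cmod v1 v2 x0| ->
  ((d0 ^+ 2 / 128)%:E <= \int[leb]_(t in [set` (`[x0, x0 + 2^-1])%R]) (hh t)%:E)%E.
Proof.
move=> hd hx0.
set I := [set` `[x0, x0 + 2^-1]].
have mI : measurable I by exact: measurable_itv.
have hI : leb I = (2^-1)%:E by rewrite /I leb_itv ?lerDl ?invr_ge0 // addrC addKr.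
have Y0 : (0 <= \int[leb]_(t in I) (hh t)%:E)%E.
  by apply: integral_ge0 => t _; rewrite lee_fin hh_ge0.
have [[y [Iy far]] | near] := pselect (exists y, I y /\ d0 / 2 <= `|cmod v1 v2 y - cmod v1 v2 x0|).
- move: Iy; rewrite /I /= in_itv /= => /andP[x0y yx].
  case: HX => _ [_ [W1 [W2 _]]].
  have e1 := incr_bound W1 x0y; have e2 := incr_bound W2 x0y.
  set J := [set` `[x0, y]].
  have mJ : measurable J by exact: measurable_itv.
  have JI : J `<=` I.
    by move=> t; rewrite /J /I /= !in_itv /= => /andP[-> ty] /=; apply: le_trans yx.
  have mg1 : measurable_fun J g1 by case: W1 => m _; apply: measurable_funS m.
  have mg2 : measurable_fun J g2 by case: W2 => m _; apply: measurable_funS m.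
  have key : ((d0 / 2)%:E <= \int[leb]_(t in J) (`|g1 t| + `|g2 t|)%:E)%E.
    under eq_integral do rewrite EFinD.
    rewrite ge0_integralD //;
    try (by apply/measurable_realfun.measurable_EFinP; apply: measurableT_comp);
    try (by move=> t _; rewrite lee_fin).
    apply: le_trans (leeD e1 e2); rewrite -EFinD lee_fin.
    apply: le_trans far _; exact: sqrt_lip.
  have bnd : (\int[leb]_(t in J) (`|g1 t| + `|g2 t|)%:E <=
      \int[leb]_(t in J) ((8 / d0)%:E * (hh t)%:E + (d0 / 8)%:E))%E.
    apply: ge0_le_integral => //;
    try (by move=> t _; rewrite lee_fin addr_ge0);
    try (by apply/measurable_realfun.measurable_EFinP;
      apply: measurable_realfun.measurable_funD; apply: measurableT_comp);
    try (by move=> t _; rewrite -EFinM -EFinD lee_fin; apply: ptw => //; rewrite sqr_ge0).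
    apply: emeasurable_funD; last exact: measurable_cst.
    apply: emeasurable_funM => //.
    apply/measurable_realfun.measurable_EFinP; apply: measurable_funS mhh => //.
  rewrite ge0_integralD // in bnd;
  try (by move=> t _; rewrite -EFinM lee_fin mulr_ge0 ?hh_ge0 // divr_ge0 // ltW);
  try (by apply: emeasurable_funM => //;
    apply/measurable_realfun.measurable_EFinP; apply: measurable_funS mhh);
  try (by move=> t _; rewrite lee_fin divr_ge0 // ltW);
  try (exact: measurable_cst).
  rewrite ge0_integralZl_EFin // in bnd;
  try (by move=> t _; rewrite lee_fin hh_ge0);
  try mhhE;
  try (by rewrite divr_ge0 // ltW).
  rewrite integral_cst // in bnd.
  rewrite [X in ((d0 / 8)%:E * X)%E](_ : _ = (y - x0)%:E) in bnd; last exact: leb_itv.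
  have sub : (\int[leb]_(t in J) (hh t)%:E <= \int[leb]_(t in I) (hh t)%:E)%E.
    apply: ge0_subset_integral => //; first mhhE.
    by move=> t _; rewrite lee_fin hh_ge0.
  have := le_trans key bnd.
  move: sub Y0; set Z := (\int[leb]_(t in J) (hh t)%:E)%E.
  set Y := (\int[leb]_(t in I) (hh t)%:E)%E.
  case: Y => [r| |] ZY Y0' H; last 2 first.
  - by rewrite leey.
  - by move: Y0'; rewrite leeNy_eq.
  case: Z ZY H => [z| |] ZY H; last 2 first.
  - by move: ZY; rewrite leye_eq.
  - by move: H; rewrite mulrNy gtr0_sg ?divr_gt0 // mul1e addNye leeNy_eq.
  move: ZY Y0' H; rewrite !lee_fin => zr r0 H.
  have hz : 7 * d0 / 16 <= 8 / d0 * z.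
    have : d0 / 8 * (y - x0) <= d0 / 16 by rewrite ler_pdivlMr //; nra.
    lra.
  have : d0 ^+ 2 * 7 / 128 <= z.
    rewrite -(ler_pM2l (_ : 0 < 8 / d0)) ?divr_gt0 //.
    apply: le_trans hz; rewrite le_eqVlt; apply/orP; left; apply/eqP; field.
    by rewrite gt_eqF.
  have : 0 <= d0 ^+ 2 by rewrite sqr_ge0.
  lra.
- have hn : forall y, I y -> `|cmod v1 v2 y - cmod v1 v2 x0| < d0 / 2.
    move=> y Iy; rewrite ltNge; apply/negP => h; apply: near; exists y; split => //.
  apply: (@le_trans _ _ (\int[leb]_(t in I) (cst ((d0 ^+ 2 / 16)%:E)) t)%E).
    rewrite integral_cst // [X in (_ * X)%E](_ : _ = (2^-1)%:E); last exact: hI.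
    rewrite -EFinM lee_fin.
    have : 0 <= d0 ^+ 2 by rewrite sqr_ge0.
    lra.
  apply: ge0_le_integral => //.
  + by move=> t _; rewrite lee_fin divr_ge0 // sqr_ge0.
  + mhhE.
  move=> t It; rewrite lee_fin /hh.
  have := hn t It.
  set c := cmod v1 v2 t; set c' := cmod v1 v2 x0.
  have c0 : 0 <= c by apply: sqrtr_ge0.
  move=> ht.
  have h1 : d0 / 2 <= `|1 - c|.
    have := ler_normD (1 - c) (c - c').
    rewrite (_ : 1 - c + (c - c') = 1 - c') ?subrKA //.
    have := ler_norml (c - c') ((d0 / 2)); lra.
  have h2 : (d0 / 2) ^+ 2 <= (1 - c) ^+ 2.
    rewrite -(real_normK (num_real (1 - c))) !expr2 ler_pM //; lra.
  have h3 : (1 - c) ^+ 2 <= (1 - c ^+ 2) ^+ 2.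
    have -> : 1 - c ^+ 2 = (1 - c) * (1 + c) by ring.
    rewrite exprMn ler_peMr ?sqr_ge0 //.
    by apply: exprn_ege1; lra.
  have hA : 0 <= g1 t ^+ 2 + g2 t ^+ 2 by rewrite addr_ge0 ?sqr_ge0.
  lra.
Qed.


Lemma sum_cst_seq (s : seq R) (k : R) : \sum_(a <- s) k = (size s)%:R * k.
Proof.
elim: s => [|a s IH]; first by rewrite big_nil mul0r.
by rewrite big_cons IH /= -nat1r mulrDl mul1r.
Qed.

Lemma count_bound (d0 : R) (s : seq R) : 0 < d0 -> uniq s ->
  {in s &, forall a b, a != b -> 1 < `|a - b|} ->
  {in s, forall a, d0 <= `|1 - cmod v1 v2 a|} ->
  (((size s)%:R * (d0 ^+ 2 / 128))%:E <= \int[leb]_x (hh x)%:E)%E.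
Proof.
move=> hd us sep inS.
pose F := fun a : R => [set` (`[a, a + 2^-1])%R].
have mF : forall a, measurable (F a) by move=> a; exact: measurable_itv.
have tF : trivIset [set` s] F.
  apply/trivIsetP => a b /= sa sb ab.
  apply/seteqP; split => // t [].
  rewrite /F /= !in_itv /= => /andP[h1 h2] /andP[h3 h4].
  have := sep a b sa sb ab.
  rewrite ltNge => /negP; apply; rewrite ler_norml; apply/andP; split; lra.
have := @ge0_integral_bigsetU _ _ _ leb _ F (fun x => (hh x)%:E) s mF us tF.
move=> /(_ _ _) H.
rewrite -sum_cst_seq -sumEFin.
apply: (@le_trans _ _ (\sum_(a <- s) \int[leb]_(x in F a) (hh x)%:E)%E).
  rewrite big_seq [X in (_ <= X)%E]big_seq; apply: lee_sum => a sa.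
  exact: local (inS a sa).
rewrite -H; last 2 first.
- mhhE.
- by move=> x _; rewrite lee_fin hh_ge0.
apply: ge0_subset_integral => //.
- elim: (s) => [|a t IH]; rewrite ?big_nil ?big_cons; first exact: measurable0.
  exact: measurableU (mF a) IH.
- mhhE.
- by move=> x _; rewrite lee_fin hh_ge0.
Qed.

End S.

Unset Implicit Arguments.
Set Strict Implicit.

Theorem lemma7 (R : realType) (E delta0 : R) (hE : 0 < E)
  (hd0 : 0 < delta0) (hd1 : delta0 < 1) :
  exists l0 : nat,
    forall v1 v2 g1 g2 : R -> R,
      in_X1 v1 v2 g1 g2 ->
      (energy v1 v2 g1 g2 <= E%:E)%E ->
      (forall x : R, `|1 - cmod v1 v2 x| < delta0) \/
      (exists (l : nat) (xs : 'I_l -> R),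
         (l <= l0)%N /\
         (forall i : 'I_l, delta0 <= `|1 - cmod v1 v2 (xs i)|) /\
         (forall x : R, (forall i : 'I_l, 1 < `|x - xs i|) ->
            `|1 - cmod v1 v2 x| <= delta0)).
Proof.
set c := delta0 ^+ 2 / 128.
have c0 : 0 < c by rewrite divr_gt0 // exprn_gt0.
have Ec0 : 0 <= E / c by rewrite divr_ge0 // ltW.
exists (Num.Def.archi_bound (E / c)) => v1 v2 g1 g2 HX hEn.
set l0 := Num.Def.archi_bound (E / c).
right.
pose S x := delta0 <= `|1 - cmod v1 v2 x|.
pose P (s : seq R) := [/\ uniq s, {in s &, forall a b, a != b -> 1 < `|a - b|}
   & {in s, forall a, S a}].
have bound : forall s, P s -> (size s <= l0)%N.
  move=> s [us sep inS].
  have := count_bound HX hd0 us sep inS.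
  rewrite -(energy_hh HX) => H; have := le_trans H hEn; rewrite lee_fin => H2.
  have := archi_boundP Ec0; rewrite -/l0 => H3.
  have : (size s)%:R < l0%:R :> R.
    apply: le_lt_trans H3; rewrite ler_pdivlMr //.
  by rewrite ltr_nat => /ltnW.
have [[s [Ps maxs]] | nomax] := pselect (exists s, P s /\
    forall x, S x -> exists2 a, a \in s & `|x - a| <= 1).
- exists (size s), (fun i => nth 0 s i); split; first exact: bound.
  case: Ps => _ _ inS; split.
  + move=> i; apply: inS; exact: mem_nth.
  + move=> x far; rewrite leNgt; apply/negP => hx.
    have [a sa ha] := maxs x (ltW hx).
    have ia : (index a s < size s)%N by rewrite index_mem.
    have := far (Ordinal ia); rewrite /= nth_index // => h.
    by move: ha; rewrite leNgt h.
- exfalso.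
  have ext : forall s, P s -> exists x, S x /\ forall a, a \in s -> 1 < `|x - a|.
    move=> s Ps; apply: contra_notP nomax => H; exists s; split => // x Sx.
    apply: contra_notP H => H; exists x; split => // a sa.
    rewrite ltNge; apply/negP => h; apply: H; exists a => //.
  have grow : forall n, exists s, P s /\ size s = n.
    elim => [|n [s [Ps sz]]]; first by exists [::]; split => //=.
    case: (Ps) => us sep inS.
    have [x [Sx fx]] := ext s Ps.
    exists (x :: s); split; last by rewrite /= sz.
    split.
    + rewrite /= us andbT; apply/negP => xs.
      by have := fx x xs; rewrite subrr normr0 ltr10.
    + move=> a b; rewrite !inE => /orP[/eqP-> | ha] /orP[/eqP-> | hb] ab.
      * by rewrite eqxx in ab.
      * exact: fx.
      * by rewrite distrC; apply: fx.
      * exact: sep.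
    + by move=> a; rewrite inE => /orP[/eqP-> | ha] //; apply: inS.
  have [s [Ps sz]] := grow l0.+1.
  by have := bound s Ps; rewrite sz ltnn.
Qed.
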